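(* Let $A_2\in\mathbf{C}^{n\times n}$, let $C_2\in\mathbf{C}^{p\times n}$ be any matrix such that the discrete-time antilinear system $x(t+1)=A_2^{\#}x(t)^{\#}$, $y(t)=C_2^{\#}x(t)^{\#}$ is observable, and let $C_N\in\mathbf{C}^{q\times n}$ be such that the pair $(A_2^{\#}A_2,C_N)$ is observable. Then the following are equivalent: (1) the antilinear system $x(t+1)=A_2^{\#}x(t)^{\#}$, $t\in\mathbf{Z}^+$, is asymptotically stable; (2) there exists a unique positive definite matrix $P_1\in\mathbf{C}^{n\times n}$ such that $A_2^{\mathrm H}P_1^{\#}A_2-P_1=-C_2^{\mathrm H}C_2$; (3) there exists a unique positive definite matrix $P_N\in\mathbf{C}^{n\times n}$ such that $(A_2^{\#}A_2)^{\mathrm H}P_N(A_2^{\#}A_2)-P_N=-C_N^{\mathrm H}C_N$. Moreover, if the system is asymptotically stable, then $(C_2,P_1)$ satisfies $A_2^{\mathrm H}P_1^{\#}A_2-P_1=-C_2^{\mathrm H}C_2$ if and only if $(C_N,P_N)=\left(\begin{bmatrix}C_2\\ C_2^{\#}A_2\end{bmatrix},P_1\right)$ satisfies $(A_2^{\#}A_2)^{\mathrm H}P_N(A_2^{\#}A_2)-P_N=-C_N^{\mathrm H}C_N$.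
   Context: $P^{\#}$, $P^{\mathrm H}$: entrywise conjugate, conjugate transpose. A positive definite matrix means a Hermitian positive definite matrix. Observability of the antilinear system means observability of its real representation $\vec x(t+1)=\{0,A_2\}_\circ\vec x(t)$, $\vec y=\{0,C_2\}_\circ\vec x$, where for matrices $A_1,A_2$ of equal size $\{A_1,A_2\}_\circ=\begin{bmatrix}\mathrm{Re}(A_1+A_2) & -\mathrm{Im}(A_1+A_2)\\ \mathrm{Im}(A_1-A_2) & \mathrm{Re}(A_1-A_2)\end{bmatrix}$ and $\vec z=[\mathrm{Re}(z)^{\mathrm T},\mathrm{Im}(z)^{\mathrm T}]^{\mathrm T}$. Asymptotic stability is in the Lyapunov sense (stable and all solutions tend to $0$). *)

(* Defs.v *)
From HB Require Import structures.
From mathcomp Require Import all_boot all_order all_algebra.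
From mathcomp Require Import reals complex.
Set Implicit Arguments. Unset Strict Implicit. Unset Printing Implicit Defensive.
Import Order.TTheory GRing.Theory Num.Theory.
Local Open Scope ring_scope.

Section Defs.
Variable R : realType.
Local Notation C := R[i].

Definition conjm m n (P : 'M[C]_(m, n)) : 'M[C]_(m, n) := map_mx (@conjc R) P.
Definition hermt m n (P : 'M[C]_(m, n)) : 'M[C]_(n, m) := (conjm P)^T.

Definition reM m n (P : 'M[C]_(m, n)) : 'M[R]_(m, n) := map_mx (@complex.Re R) P.
Definition imM m n (P : 'M[C]_(m, n)) : 'M[R]_(m, n) := map_mx (@complex.Im R) P.

Definition realrep m n (A1 A2 : 'M[C]_(m, n)) : 'M[R]_(m + m, n + n) :=
  block_mx (reM (A1 + A2)) (- imM (A1 + A2)) (imM (A1 - A2)) (reM (A1 - A2)).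

Definition posdef n (P : 'M[C]_n) : Prop :=
  hermt P = P /\
  forall x : 'cV[C]_n, x != 0 -> 0 < (hermt x *m P *m x) 0 0.

Definition observable (K : nzRingType) n p (A : 'M[K]_n) (Cm : 'M[K]_(p, n)) :=
  forall x0 : 'cV[K]_n, (forall t : nat, Cm *m (A ^+ t) *m x0 = 0) -> x0 = 0.

(* observability of the antilinear system x(t+1)=A2^# x(t)^#, y=C2^# x(t)^#:
   observability of its real representation *)
Definition antilin_observable n p (A2 : 'M[C]_n) (C2 : 'M[C]_(p, n)) :=
  observable (realrep 0 A2) (realrep 0 C2).

Fixpoint antilin_traj n (A2 : 'M[C]_n) (x0 : 'cV[C]_n) (t : nat) : 'cV[C]_n :=
  match t with
  | 0 => x0
  | t'.+1 => conjm A2 *m conjm (antilin_traj A2 x0 t')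
  end.

(* asymptotic stability (Lyapunov): stable and every solution tends to 0;
   the (max-entry) norm on C^n is used *)
Definition antilin_asym_stable n (A2 : 'M[C]_n) : Prop :=
  (forall e : R, 0 < e -> exists2 d : R, 0 < d &
     forall x0 : 'cV[C]_n, (forall i, `|x0 i 0| < d%:C%C) ->
       forall t i, `|antilin_traj A2 x0 t i 0| < e%:C%C) /\
  (forall x0 : 'cV[C]_n, forall e : R, 0 < e -> exists T : nat,
     forall t, (T <= t)%N -> forall i, `|antilin_traj A2 x0 t i 0| < e%:C%C).

End Defs.

(* Main.v *)
Require Import Defs.
From HB Require Import structures.
From mathcomp Require Import all_boot all_order all_algebra.
From mathcomp Require Import reals complex.
From mathcomp Require Import ring lra.
From Stdlib Require Import Classical.
Import Order.TTheory GRing.Theory Num.Theory.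
Local Open Scope ring_scope.
Local Open Scope complex_scope.
Set Implicit Arguments. Unset Strict Implicit. Unset Printing Implicit Defensive.


Section Aux.
Variable R : realType.
Local Notation C := R[i].

Lemma conjmM m n p (A : 'M[C]_(m,n)) (B : 'M[C]_(n,p)) :
  conjm (A *m B) = conjm A *m conjm B.
Proof. exact: map_mxM. Qed.
Lemma conjmK m n (A : 'M[C]_(m,n)) : conjm (conjm A) = A.
Proof. by apply/matrixP => i j; rewrite !mxE conjcK. Qed.
Lemma conjmD m n (A B : 'M[C]_(m,n)) : conjm (A + B) = conjm A + conjm B.
Proof. exact: map_mxD. Qed.
Lemma conjmN m n (A : 'M[C]_(m,n)) : conjm (- A) = - conjm A.
Proof. exact: map_mxN. Qed.
Lemma conjmB m n (A B : 'M[C]_(m,n)) : conjm (A - B) = conjm A - conjm B.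
Proof. exact: map_mxB. Qed.
Lemma conjm0 m n : conjm (0 : 'M[C]_(m,n)) = 0.
Proof. exact: map_mx0. Qed.
Lemma conjm_tr m n (A : 'M[C]_(m,n)) : conjm A^T = (conjm A)^T.
Proof. by rewrite /conjm map_trmx. Qed.
Lemma hermtM m n p (A : 'M[C]_(m,n)) (B : 'M[C]_(n,p)) :
  hermt (A *m B) = hermt B *m hermt A.
Proof. by rewrite /hermt conjmM trmx_mul. Qed.
Lemma hermtK m n (A : 'M[C]_(m,n)) : hermt (hermt A) = A.
Proof. by rewrite /hermt conjm_tr trmxK conjmK. Qed.
Lemma hermtD m n (A B : 'M[C]_(m,n)) : hermt (A + B) = hermt A + hermt B.
Proof. by rewrite /hermt conjmD raddfD. Qed.
Lemma hermtN m n (A : 'M[C]_(m,n)) : hermt (- A) = - hermt A.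
Proof. by rewrite /hermt conjmN raddfN. Qed.
Lemma hermtB m n (A B : 'M[C]_(m,n)) : hermt (A - B) = hermt A - hermt B.
Proof. by rewrite hermtD hermtN. Qed.
Lemma hermt0 m n : hermt (0 : 'M[C]_(m,n)) = 0.
Proof. by rewrite /hermt conjm0 trmx0. Qed.
Lemma conjmX n (A : 'M[C]_n) k : conjm (A ^+ k) = conjm A ^+ k.
Proof.
elim: k => [|k IH]; first by rewrite !expr0 /conjm map_mx1.
by rewrite !exprS -!mulmxE conjmM IH.
Qed.
Lemma hermtX n (A : 'M[C]_n) k : hermt (A ^+ k) = hermt A ^+ k.
Proof.
elim: k => [|k IH]; first by rewrite !expr0 /hermt /conjm map_mx1 trmx1.
by rewrite exprS exprSr -!mulmxE hermtM IH.
Qed.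
Lemma hermt_entry m n (A : 'M[C]_(m,n)) i j : hermt A i j = conjc (A j i).
Proof. by rewrite !mxE. Qed.

Local Notation nc := (@Normc.normc R).

Lemma nc_ge0 (z : C) : 0 <= nc z.
Proof. by case: z => a b; rewrite /Normc.normc sqrtr_ge0. Qed.
Lemma normE (z : C) : `|z| = (nc z)%:C.
Proof. by []. Qed.
Lemma ncJ (z : C) : nc (conjc z) = nc z.
Proof. by case: z => a b; rewrite /Normc.normc /= sqrrN. Qed.
Lemma ncD (x y : C) : nc (x + y) <= nc x + nc y.
Proof. exact: le_normcD. Qed.
Lemma ncM (x y : C) : nc (x * y) = nc x * nc y.
Proof. exact: Normc.normcM. Qed.
Lemma ncN (x : C) : nc (- x) = nc x.
Proof. exact: normcN. Qed.
Lemma nc0 : nc 0 = 0.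
Proof. exact: Normc.normc0. Qed.
Lemma nc_sum (I : finType) (F : I -> C) : nc (\sum_i F i) <= \sum_i nc (F i).
Proof.
apply: (big_ind2 (fun x y => nc x <= y)); first by rewrite nc0.
  by move=> x1 x2 y1 y2 h1 h2; apply: le_trans (ncD _ _) _; apply: lerD.
by [].
Qed.
Lemma nc_gt0 (z : C) : z != 0 -> 0 < nc z.
Proof.
move=> nz; rewrite lt_def nc_ge0 andbT; apply/eqP => /Normc.eq0_normc h.
by rewrite h eqxx in nz.
Qed.

Definition mn m n (A : 'M[C]_(m,n)) : R := \sum_i \sum_j nc (A i j).

Lemma sum_ge_one (I : finType) (F : I -> R) i :
  (forall j, 0 <= F j) -> F i <= \sum_j F j.
Proof.
move=> h; rewrite (bigD1 i) //= lerDl; apply: sumr_ge0 => j _; exact: h.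
Qed.

Lemma mn_ge0 m n (A : 'M[C]_(m,n)) : 0 <= mn A.
Proof. by apply: sumr_ge0 => i _; apply: sumr_ge0 => j _; exact: nc_ge0. Qed.
Lemma mn_row m n (A : 'M[C]_(m,n)) i : \sum_j nc (A i j) <= mn A.
Proof.
rewrite /mn; apply: (@sum_ge_one _ (fun i => \sum_j nc (A i j)) i) => k.
by apply: sumr_ge0 => j _; exact: nc_ge0.
Qed.
Lemma mn_entry m n (A : 'M[C]_(m,n)) i j : nc (A i j) <= mn A.
Proof.
apply: le_trans (mn_row A i).
by apply: (@sum_ge_one _ (fun j => nc (A i j)) j) => k; exact: nc_ge0.
Qed.
Lemma mn0 m n : mn (0 : 'M[C]_(m,n)) = 0.
Proof. by apply: big1 => i _; apply: big1 => j _; rewrite mxE nc0. Qed.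
Lemma mnD m n (A B : 'M[C]_(m,n)) : mn (A + B) <= mn A + mn B.
Proof.
rewrite /mn -big_split /=; apply: ler_sum => i _.
rewrite -big_split /=; apply: ler_sum => j _; rewrite mxE; exact: ncD.
Qed.
Lemma mnN m n (A : 'M[C]_(m,n)) : mn (- A) = mn A.
Proof. by apply: eq_bigr => i _; apply: eq_bigr => j _; rewrite mxE ncN. Qed.
Lemma mnB m n (A B : 'M[C]_(m,n)) : mn (A - B) <= mn A + mn B.
Proof. by apply: le_trans (mnD _ _) _; rewrite mnN. Qed.
Lemma mn_conj m n (A : 'M[C]_(m,n)) : mn (conjm A) = mn A.
Proof. by apply: eq_bigr => i _; apply: eq_bigr => j _; rewrite mxE ncJ. Qed.
Lemma mn_tr m n (A : 'M[C]_(m,n)) : mn A^T = mn A.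
Proof.
rewrite /mn exchange_big; apply: eq_bigr => i _; apply: eq_bigr => j _.
by rewrite mxE.
Qed.
Lemma mn_hermt m n (A : 'M[C]_(m,n)) : mn (hermt A) = mn A.
Proof. by rewrite /hermt mn_tr mn_conj. Qed.
Lemma mnM m n p (A : 'M[C]_(m,n)) (B : 'M[C]_(n,p)) :
  mn (A *m B) <= mn A * mn B.
Proof.
rewrite /mn mulr_suml; apply: ler_sum => i _.
apply: (@le_trans _ _ (\sum_j \sum_k nc (A i k) * nc (B k j))).
  apply: ler_sum => j _; rewrite mxE; apply: le_trans (nc_sum _) _.
  by apply: ler_sum => k _; rewrite ncM.
rewrite exchange_big /= mulr_suml; apply: ler_sum => k _.
rewrite -mulr_sumr; apply: ler_wpM2l; first exact: nc_ge0.
exact: mn_row.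
Qed.
Lemma mn_sum m n (I : finType) (F : I -> 'M[C]_(m,n)) :
  mn (\sum_i F i) <= \sum_i mn (F i).
Proof.
apply: (big_ind2 (fun x y => mn x <= y)); first by rewrite mn0.
  by move=> x1 x2 y1 y2 h1 h2; apply: le_trans (mnD _ _) _; apply: lerD.
by [].
Qed.
Lemma mnZ m n (a : C) (A : 'M[C]_(m,n)) : mn (a *: A) = nc a * mn A.
Proof.
rewrite /mn mulr_sumr; apply: eq_bigr => i _; rewrite mulr_sumr.
by apply: eq_bigr => j _; rewrite mxE ncM.
Qed.
Lemma mn3 m n p r (A : 'M[C]_(m,n)) (B : 'M[C]_(n,p)) (D : 'M[C]_(p,r)) :
  mn (A *m B *m D) <= mn A * mn B * mn D.
Proof.
apply: le_trans (mnM _ _) _; apply: ler_wpM2r; first exact: mn_ge0.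
exact: mnM.
Qed.

Definition ss m (z : 'cV[C]_m) : R := \sum_i nc (z i 0) ^+ 2.

Lemma ss_ge0 m (z : 'cV[C]_m) : 0 <= ss z.
Proof. by apply: sumr_ge0 => i _; rewrite exprn_ge0 // nc_ge0. Qed.
Lemma ss_entry m (z : 'cV[C]_m) i : nc (z i 0) ^+ 2 <= ss z.
Proof.
by apply: (@sum_ge_one _ (fun i => nc (z i 0) ^+ 2) i) => k; rewrite exprn_ge0 // nc_ge0.
Qed.
Lemma form_ss m (z : 'cV[C]_m) : (hermt z *m z) 0 0 = (ss z)%:C.
Proof.
rewrite mxE /ss rmorph_sum; apply: eq_bigr => i _.
by rewrite rmorphXn /= -normE sqr_normc !mxE mulrC.
Qed.
Lemma ss_gt0 m (z : 'cV[C]_m) : z != 0 -> 0 < ss z.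
Proof.
move=> nz.
have [i hi] : exists i, z i 0 != 0.
  apply: NNPP => hn; move/eqP: nz; apply; apply/matrixP => i j.
  rewrite ord1 mxE; apply/eqP; apply: NNPP => h; apply: hn; by exists i; apply/negP.
apply: lt_le_trans (ss_entry z i); rewrite exprn_gt0 //; exact: nc_gt0.
Qed.
Lemma mn_cV m (z : 'cV[C]_m) : mn z = \sum_i nc (z i 0).
Proof. by apply: eq_bigr => i _; rewrite big_ord1. Qed.
Lemma mn_ss m (z : 'cV[C]_m) (r : R) : 0 <= r -> ss z <= r ^+ 2 -> mn z <= m%:R * r.
Proof.
move=> r0 hs; rewrite mn_cV.
apply: (@le_trans _ _ (\sum_(i < m) r)); last by rewrite sumr_const card_ord mulr_natl.
apply: ler_sum => i _.
have h := le_trans (ss_entry z i) hs; have h0 := nc_ge0 (z i 0).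
rewrite leNgt; apply/negP => hlt; move: h; rewrite leNgt; move/negP; apply.
by rewrite ltr_pXn2r // ?nc_ge0.
Qed.
Lemma quad_bound m (y : 'cV[C]_m) (P : 'M[C]_m) :
  nc ((hermt y *m P *m y) 0 0) <= mn y ^+ 2 * mn P.
Proof.
apply: le_trans (mn_entry _ 0 0) _; apply: le_trans (mn3 _ _ _) _.
by rewrite mn_hermt expr2 mulrAC.
Qed.

End Aux.

Section Aux3.
Variable R : realType.
Local Notation C := R[i].
Local Notation nc := (@Normc.normc R).
Lemma mul1mx' m p (X : 'M[C]_(m,p)) : (1 : 'M[C]_m) *m X = X.
Proof. exact: mul1mx. Qed.
Lemma mulmx1' m p (X : 'M[C]_(m,p)) : X *m (1 : 'M[C]_p) = X.
Proof. exact: mulmx1. Qed.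
Lemma hermt1 m : hermt (1 : 'M[C]_m) = 1.
Proof. by rewrite /hermt /conjm map_mx1 trmx1. Qed.

Lemma Re_add (x y : C) : complex.Re (x + y) = complex.Re x + complex.Re y.
Proof. by case: x => a b; case: y => c d. Qed.
Lemma Im_add (x y : C) : complex.Im (x + y) = complex.Im x + complex.Im y.
Proof. by case: x => a b; case: y => c d. Qed.
Lemma conj_real (w : C) : conjc w = w -> w = (complex.Re w)%:C.
Proof.
case: w => a b /= h; have hb : - b = b by case: h.
rewrite /real_complex_def /=; congr (_ +i* _); lra.
Qed.
Lemma eps_zero (z : C) : (forall e : R, 0 < e -> nc z < e) -> z = 0.
Proof.
move=> h; apply: NNPP => nz; have := h _ (nc_gt0 (introN eqP nz)).
by rewrite ltxx.
Qed.
Lemma Re_le_nc (z : C) : `|complex.Re z| <= nc z.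
Proof. by rewrite -lecR -normE; exact: normc_ge_Re. Qed.

Definition cv0 m p (u : nat -> 'M[C]_(m,p)) :=
  forall e : R, 0 < e -> exists T, forall t, (T <= t)%N -> mn (u t) < e.

Section Traj.
Variables (n : nat) (A : 'M[C]_n).
Local Notation M := (conjm A *m A).

Lemma traj_even x k : antilin_traj A x k.*2 = M ^+ k *m x.
Proof.
elim: k => [|k IH]; first by rewrite expr0 mul1mx'.
by rewrite doubleS /= IH !conjmM !conjmK exprS -mulmxE !mulmxA.
Qed.
Lemma traj_odd x k : antilin_traj A x k.*2.+1 = conjm A *m conjm (M ^+ k *m x).
Proof. by rewrite /= traj_even. Qed.

Lemma mn_traj x t : mn (antilin_traj A x t) <= (1 + mn A) * mn (M ^+ t./2 *m x).
Proof.
rewrite -[t in antilin_traj _ _ t]odd_double_half; case: (odd t) => /=.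
  rewrite add0n traj_even; apply: le_trans (mnM _ _) _; rewrite !mn_conj.
  have := mn_ge0 (M ^+ t./2 *m x); have := mn_ge0 A; nra.
rewrite ?add0n traj_even; have := mn_ge0 (M ^+ t./2 *m x); have := mn_ge0 A; nra.
Qed.

Lemma stab_cv : antilin_asym_stable A -> forall x : 'cV[C]_n, cv0 (fun k => M ^+ k *m x).
Proof.
move=> [_ h2] x e e0.
have N0 : (0 : R) <= n%:R by [].
have e'0 : 0 < e / (n%:R + 1) by apply: divr_gt0 => //; lra.
case: (h2 x _ e'0) => T hT; exists T => t tT.
have tt2 : (T <= t.*2)%N by apply: leq_trans tT _; rewrite -addnn leq_addr.
have hT' := hT (t.*2) tt2.
rewrite -traj_even mn_cV.
apply: (@le_lt_trans _ _ (\sum_(i < n) (e / (n%:R + 1)))).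
  apply: ler_sum => i _; apply: ltW; rewrite -ltcR -normE; exact: hT'.
rewrite sumr_const card_ord.
have -> : e / (n%:R + 1) *+ n = n%:R * (e / (n%:R + 1)) by rewrite mulr_natl.
rewrite mulrA ltr_pdivrMr; last lra.
nra.
Qed.
End Traj.

Lemma delta_entry m p (X : 'M[C]_(m,p)) i j :
  ((delta_mx 0 i : 'rV[C]_m) *m X *m (delta_mx j 0 : 'cV[C]_p)) 0 0 = X i j.
Proof. by rewrite -rowE -colE !mxE. Qed.
Lemma hermt_delta m (i : 'I_m) : hermt (delta_mx i 0 : 'cV[C]_m) = delta_mx 0 i.
Proof.
by apply/matrixP => a b; rewrite !mxE andbC conjc_nat.
Qed.

Section Fix.
Variables (n : nat) (M : 'M[C]_n).
Hypothesis hcv : forall x : 'cV[C]_n, cv0 (fun k => M ^+ k *m x).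

Lemma fix_zero (E : 'M[C]_n) : hermt M *m E *m M = E -> E = 0.
Proof.
move=> hE.
have hk : forall k, E = hermt (M ^+ k) *m E *m M ^+ k.
  elim=> [|k IH]; first by rewrite expr0 hermt1 mul1mx' mulmx1'.
  transitivity (hermt (M ^+ k) *m E *m M ^+ k); first exact: IH.
  have hMk : M ^+ k.+1 = M *m M ^+ k by rewrite exprS.
  by rewrite -{1}hE hMk hermtM !mulmxA.
apply/matrixP => i j; rewrite mxE; apply: eps_zero => e e0.
set mE := mn E.
have mE0 : 0 <= mE := mn_ge0 E.
have q0 : 0 < e / (mE + 1) by apply: divr_gt0 => //; lra.
have hq : e / (mE + 1) * (mE + 1) = e by rewrite mulfVK //; apply: lt0r_neq0; lra.
case: (hcv (delta_mx i 0) ltr01) => T1 h1.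
case: (hcv (delta_mx j 0) q0) => T2 h2.
set k := maxn T1 T2.
have u1 := h1 k (leq_maxl _ _); have v1 := h2 k (leq_maxr _ _).
rewrite (hk k) -(delta_entry _ i j).
have -> : (delta_mx 0 i : 'rV[C]_n) *m (hermt (M ^+ k) *m E *m M ^+ k) *m (delta_mx j 0 : 'cV[C]_n) =
  hermt (M ^+ k *m (delta_mx i 0 : 'cV[C]_n)) *m E *m (M ^+ k *m (delta_mx j 0 : 'cV[C]_n)).
  by rewrite hermtM hermt_delta !mulmxA.
apply: le_lt_trans (mn_entry _ 0 0) _; apply: le_lt_trans (mn3 _ _ _) _.
rewrite mn_hermt -/mE.
move: u1 v1; set a := mn _; set b := mn _ => u1 v1.
have a0 : 0 <= a by exact: mn_ge0.
have b0 : 0 <= b by exact: mn_ge0.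
move: hq q0; set q := e / (mE + 1) => hq q0.
have hmb : 0 <= mE * b by apply: mulr_ge0.
have g1 : a * (mE * b) <= mE * b by nra.
have g2 : mE * b <= mE * q by apply: ler_wpM2l =>//; apply: ltW.
rewrite -mulrA; lra.
Qed.
End Fix.

Lemma rinj_unit m (B : 'M[C]_m) : (forall u : 'rV[C]_m, u *m B = 0 -> u = 0) ->
  B \in unitmx.
Proof.
move=> h; rewrite -row_free_unit -kermx_eq0; apply/eqP/row_matrixP => i.
by rewrite row0; apply: h; rewrite -row_mul mulmx_ker row0.
Qed.
Lemma cinj_unit m (B : 'M[C]_m) : (forall y : 'cV[C]_m, B *m y = 0 -> y = 0) ->
  B \in unitmx.
Proof.
move=> h; rewrite -unitmx_tr; apply: rinj_unit => u hu; apply: trmx_inj.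
by rewrite trmx0; apply: h; rewrite -(trmxK B) -trmx_mul hu trmx0.
Qed.

Section Lyap.
Variables (n : nat) (M : 'M[C]_n).
Definition Lf (X : 'M[C]_n) := hermt M *m X *m M - X.
Fact Lf_semilinear : semilinear Lf.
Proof.
split=> [a X|X Y]; rewrite /Lf.
  by rewrite -scalemxAr -scalemxAl scalerBr.
by rewrite mulmxDr mulmxDl opprD addrACA.
Qed.
HB.instance Definition _ :=
  GRing.isSemilinear.Build C 'M[C]_n 'M[C]_n _ Lf Lf_semilinear.

Lemma Lf_surj : (forall X, Lf X = 0 -> X = 0) -> forall Q, exists P, Lf P = Q.
Proof.
move=> hinj Q.
have hB : lin_mx Lf \in unitmx.
  apply: rinj_unit => u hu.
  have : Lf (vec_mx u) = 0.
    by apply/eqP; rewrite -mxvec_eq0 -mul_rV_lin hu.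
  by move/hinj => h; rewrite -(vec_mxK u) h linear0.
exists (vec_mx (mxvec Q *m invmx (lin_mx Lf))).
apply: (can_inj (@mxvecK _ _ _)).
by rewrite -mul_vec_lin vec_mxK mulmxKV.
Qed.
End Lyap.

End Aux3.

Section Aux4.
Variable R : realType.
Local Notation C := R[i].
Local Notation nc := (@Normc.normc R).

Definition qf m (P : 'M[C]_m) (y : 'cV[C]_m) := (hermt y *m P *m y) 0 0.

Section Tele.
Variables (n q : nat) (M : 'M[C]_n) (CN : 'M[C]_(q,n)) (P : 'M[C]_n).
Hypothesis heq : hermt M *m P *m M - P = - (hermt CN *m CN).

Lemma tele K : P = \sum_(j < K) hermt (M ^+ j) *m (hermt CN *m CN) *m M ^+ j
   + hermt (M ^+ K) *m P *m M ^+ K.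
Proof.
have hP' : hermt M *m P *m M = P - hermt CN *m CN.
  by rewrite -[LHS](subrK P) heq addrC.
elim: K => [|K IH]; first by rewrite big_ord0 add0r expr0 hermt1 mul1mx' mulmx1'.
rewrite big_ord_recr /= -addrA.
have hMk : M ^+ K.+1 = M *m M ^+ K by rewrite exprS.
have -> : hermt (M ^+ K.+1) *m P *m M ^+ K.+1 =
    hermt (M ^+ K) *m (P - hermt CN *m CN) *m M ^+ K.
  by rewrite hMk hermtM -hP' !mulmxA.
have -> : hermt (M ^+ K) *m (hermt CN *m CN) *m M ^+ K +
    hermt (M ^+ K) *m (P - hermt CN *m CN) *m M ^+ K = hermt (M ^+ K) *m P *m M ^+ K.
  by rewrite mulmxBr mulmxBl addrC subrK.
exact: IH.
Qed.

Lemma qf_tele K (x : 'cV[C]_n) :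
  qf P x = (\sum_(j < K) ss (CN *m M ^+ j *m x))%:C + qf P (M ^+ K *m x).
Proof.
have e1 : forall j, hermt x *m (hermt (M ^+ j) *m (hermt CN *m CN) *m M ^+ j) *m x =
    hermt (CN *m M ^+ j *m x) *m (CN *m M ^+ j *m x).
  by move=> j; rewrite !hermtM !mulmxA.
have e2 : hermt x *m (hermt (M ^+ K) *m P *m M ^+ K) *m x =
    hermt (M ^+ K *m x) *m P *m (M ^+ K *m x) by rewrite hermtM !mulmxA.
rewrite /qf {1}(tele K) mulmxDr mulmxDl mxE e2 mulmx_sumr mulmx_suml summxE rmorph_sum.
by congr (_ + _); apply: eq_bigr => j _; rewrite e1 form_ss.
Qed.

Hypothesis hherm : hermt P = P.

Lemma qf_real y : qf P y = (complex.Re (qf P y))%:C.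
Proof.
apply: conj_real; rewrite /qf -hermt_entry !hermtM hermtK hherm.
by rewrite !mulmxA.
Qed.

Hypothesis hcv : forall x : 'cV[C]_n, cv0 (fun k => M ^+ k *m x).
Hypothesis hobs : observable M CN.

Lemma sol_posdef (x : 'cV[C]_n) : x != 0 -> 0 < qf P x.
Proof.
move=> hx.
have [j0 hj0] : exists j0, CN *m M ^+ j0 *m x != 0.
  apply: NNPP => hn; move/eqP: hx; apply; apply: hobs => t.
  apply: NNPP => ht; apply: hn; exists t; exact/eqP.
set s := ss (CN *m M ^+ j0 *m x).
have s0 : 0 < s := ss_gt0 hj0.
set mP := mn P.
have mP0 : 0 <= mP := mn_ge0 P.
set e2 := s / (2 * (mP + 1)).
have e20 : 0 < e2 by apply: divr_gt0 => //; lra.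
have he2 : e2 * (2 * (mP + 1)) = s by rewrite mulfVK //; apply: lt0r_neq0; lra.
case: (hcv x ltr01) => T1 h1.
case: (hcv x e20) => T2 h2.
set K := maxn (maxn T1 T2) j0.+1.
have hK1 : (T1 <= K)%N by rewrite !leq_max leqnn.
have hK2 : (T2 <= K)%N by rewrite !leq_max leqnn orbT.
have hKj : (j0 < K)%N by rewrite !leq_max leqnn orbT.
have y1 := h1 K hK1; have y2 := h2 K hK2.
have hw := quad_bound (M ^+ K *m x) P.
have hS : s <= \sum_(j < K) ss (CN *m M ^+ j *m x).
  exact: (@sum_ge_one R _ (fun j : 'I_K => ss (CN *m M ^+ j *m x)) (Ordinal hKj)
     (fun j => ss_ge0 _)).
have hRe := Re_le_nc (qf P (M ^+ K *m x)).
rewrite (qf_tele K x) (qf_real (M ^+ K *m x)) ltcE /=.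
move: hw hRe y1 y2 hS; rewrite -/mP.
set b := mn _; set S := \sum_(j < K) _; set w := complex.Re _; set W := nc _.
move=> hw hRe y1 y2 hS.
have b0 : 0 <= b by exact: mn_ge0.
have bb : b * b <= b by nra.
have g1 : b ^+ 2 * mP <= b * mP by rewrite expr2; apply: ler_wpM2r.
have g2 : b * mP <= e2 * mP by apply: ler_wpM2r => //; apply: ltW.
have g3 : - w <= `|w| by rewrite -normrN ler_norm.
rewrite addr0 eqxx /=; nra.
Qed.
End Tele.

Lemma CH_obs n q (M : 'M[C]_n) (CN : 'M[C]_(q,n)) : exists d, forall y : 'cV[C]_n,
  (forall j, (j < d)%N -> CN *m M ^+ j *m y = 0) -> forall t, CN *m M ^+ t *m y = 0.
Proof.
case: n M CN => [|n'] M CN.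
  by exists 0%N => y _ t; rewrite [y]flatmx0 mulmx0.
exists (degree_mxminpoly M) => y hy t.
have hm := horner_mx_mem M ('X ^+ t).
rewrite rmorphXn /= horner_mx_X in hm.
case/submxP: hm => u hu.
have hMt : M ^+ t = \sum_(i < degree_mxminpoly M) u 0 i *: M ^+ i.
  apply: (can_inj (@mxvecK _ _ _)); rewrite hu mulmx_sum_row linear_sum.
  by apply: eq_bigr => i _; rewrite linearZ rowK.
rewrite hMt mulmx_sumr mulmx_suml big1 // => i _.
by rewrite -scalemxAr -scalemxAl hy // scaler0.
Qed.

End Aux4.

Section Aux5.
Variable R : realType.
Local Notation C := R[i].
Local Notation nc := (@Normc.normc R).

Lemma sum_mono (a : nat -> R) K t : (forall j, 0 <= a j) -> (K <= t)%N ->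
  \sum_(j < K) a j <= \sum_(j < t) a j.
Proof.
move=> a0 hKt; rewrite -!(big_mkord xpredT) (big_cat_nat (leq0n K) hKt) /=.
by rewrite lerDl; apply: sumr_ge0 => j _.
Qed.

Lemma tail_small (a : nat -> R) B : (forall j, 0 <= a j) ->
  (forall K, \sum_(j < K) a j <= B) ->
  forall e, 0 < e -> exists T, forall t, (T <= t)%N -> a t < e.
Proof.
move=> a0 hB e e0; apply: NNPP => hn.
have H : forall T, exists t, (T <= t)%N /\ e <= a t.
  move=> T; apply: NNPP => hT; apply: hn; exists T => t tT.
  rewrite ltNge; apply/negP => hle; apply: hT; by exists t.
have G : forall N, exists K, N%:R * e <= \sum_(j < K) a j.
  elim=> [|N [K hK]]; first by exists 0%N; rewrite mul0r big_ord0.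
  case: (H K) => t [tK ht]; exists t.+1.
  rewrite big_ord_recr /= -addn1 natrD mulrDl mul1r.
  apply: lerD => //; apply: le_trans hK _; exact: sum_mono.
have hx : 0 <= `|B| / e by apply: divr_ge0 => //; apply: ltW.
have hN := archi_boundP hx.
case: (G (Num.bound (`|B| / e))) => K hK.
have := hB K.
have : `|B| < (Num.bound (`|B| / e))%:R * e by rewrite -ltr_pdivrMr.
have := ler_norm B.
lra.
Qed.

Section Conv.
Variables (n q : nat) (M : 'M[C]_n) (CN : 'M[C]_(q,n)) (P : 'M[C]_n).
Hypothesis heq : hermt M *m P *m M - P = - (hermt CN *m CN).
Hypothesis hpd : posdef P.

Definition vq (y : 'cV[C]_n) := complex.Re (qf P y).

Lemma vq_ge0 y : 0 <= vq y.
Proof.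
case: (eqVneq y 0) => [->|hy].
  by rewrite /vq /qf mulmx0 mxE.
have := hpd.2 y hy; rewrite ltcE => /andP [_ hr]; exact: ltW.
Qed.

Lemma vq_tele K x : vq x = \sum_(j < K) ss (CN *m M ^+ j *m x) + vq (M ^+ K *m x).
Proof. by rewrite /vq (qf_tele heq K x) Re_add. Qed.

Lemma psum_le K x : \sum_(j < K) ss (CN *m M ^+ j *m x) <= vq x.
Proof. by rewrite (vq_tele K x) lerDl vq_ge0. Qed.

Lemma vq_bound x : vq x <= mn x ^+ 2 * mn P.
Proof.
apply: le_trans (ler_norm _) _; apply: le_trans (Re_le_nc _) _.
exact: quad_bound.
Qed.

Lemma ss_le j x : ss (CN *m M ^+ j *m x) <= mn x ^+ 2 * mn P.
Proof.
apply: le_trans (vq_bound x); apply: le_trans (psum_le j.+1 x).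
exact: (@sum_ge_one R _ (fun i : 'I_j.+1 => ss (CN *m M ^+ i *m x)) ord_max
     (fun i => ss_ge0 _)).
Qed.

End Conv.

End Aux5.

Section Aux6.
Variable R : realType.
Local Notation C := R[i].
Local Notation nc := (@Normc.normc R).

Lemma ss_eq0 m (z : 'cV[C]_m) : ss z = 0 -> z = 0.
Proof.
move=> h; apply: NNPP => nz; have := ss_gt0 (introN eqP nz); by rewrite h ltxx.
Qed.

Lemma gram_bound n q (M : 'M[C]_n) (CN : 'M[C]_(q,n)) : observable M CN ->
  exists d c, 0 <= c /\ forall y : 'cV[C]_n,
    mn y <= c * \sum_(j < d) mn (CN *m M ^+ j *m y).
Proof.
move=> hobs; case: (CH_obs M CN) => d hd.
set W := \sum_(j < d) hermt (CN *m M ^+ j) *m (CN *m M ^+ j).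
have hW : W \in unitmx.
  apply: cinj_unit => y hy.
  have hq : qf W y = 0 by rewrite /qf -mulmxA hy mulmx0 mxE.
  have hq' : qf W y = (\sum_(j < d) ss (CN *m M ^+ j *m y))%:C.
    rewrite /qf mulmx_sumr mulmx_suml summxE rmorph_sum; apply: eq_bigr => j _.
    have -> : hermt y *m (hermt (CN *m M ^+ j) *m (CN *m M ^+ j)) *m y =
      hermt (CN *m M ^+ j *m y) *m (CN *m M ^+ j *m y).
      by rewrite [hermt (CN *m M ^+ j *m y)]hermtM !mulmxA.
    exact: form_ss.
  rewrite hq' in hq; case: hq => hs.
  have hs0 : forall j : 'I_d, ss (CN *m M ^+ j *m y) = 0.
    by move=> j; apply: (psumr_eq0P _ hs) => // i _; exact: ss_ge0.
  apply: hobs => t; apply: hd => j hj.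
  exact: ss_eq0 (hs0 (Ordinal hj)).
exists d, (mn (invmx W) * \sum_(j < d) mn (CN *m M ^+ j)); split.
  by apply: mulr_ge0; [exact: mn_ge0 | apply: sumr_ge0 => j _; exact: mn_ge0].
move=> y.
have hy : y = invmx W *m (W *m y) by rewrite mulmxA mulVmx // mul1mx.
rewrite {1}hy; apply: le_trans (mnM _ _) _; rewrite -mulrA.
apply: ler_wpM2l; first exact: mn_ge0.
rewrite /W mulmx_suml; apply: le_trans (mn_sum _) _.
rewrite mulr_sumr; apply: ler_sum => j _.
rewrite -mulmxA; apply: le_trans (mnM _ _) _; rewrite mn_hermt.
apply: ler_wpM2r; first exact: mn_ge0.
exact: (@sum_ge_one R _ (fun j : 'I_d => mn (CN *m M ^+ j)) j (fun i => mn_ge0 _)).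
Qed.

End Aux6.

Section Aux7.
Variable R : realType.
Local Notation C := R[i].
Local Notation nc := (@Normc.normc R).

Lemma conv_stable n q (A : 'M[C]_n) (CN : 'M[C]_(q,n)) (P : 'M[C]_n) :
  posdef P ->
  hermt (conjm A *m A) *m P *m (conjm A *m A) - P = - (hermt CN *m CN) ->
  observable (conjm A *m A) CN -> antilin_asym_stable A.
Proof.
move=> hpd heq hobs.
case: (gram_bound hobs) => d [c [c0 hc]].
set M := conjm A *m A in heq hobs hc *.
set mP := mn P.
have mP0 : 0 <= mP := mn_ge0 P.
have hshift : forall (x : 'cV[C]_n) k j,
    CN *m M ^+ j *m (M ^+ k *m x) = CN *m M ^+ (j + k) *m x.
  move=> x k j; have -> : M ^+ (j + k) = M ^+ j *m M ^+ k by rewrite exprD.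
  by rewrite !mulmxA.
have B1 : forall (x : 'cV[C]_n) k,
    mn (M ^+ k *m x) <= c * (d%:R * (q%:R * (mn x * (1 + mP)))).
  move=> x k; apply: le_trans (hc _) _; apply: ler_wpM2l => //.
  apply: (@le_trans _ _ (\sum_(j < d) q%:R * (mn x * (1 + mP)))); last first.
    by rewrite sumr_const card_ord [X in _ <= X]mulr_natl.
  apply: ler_sum => j _; rewrite hshift; apply: mn_ss.
    by apply: mulr_ge0; [exact: mn_ge0 | lra].
  apply: le_trans (ss_le heq hpd _ _) _.
  rewrite exprMn; apply: ler_wpM2l; first exact: sqr_ge0.
  rewrite -/mP expr2; nra.
have B2 : forall (x : 'cV[C]_n) e, 0 < e ->
    exists T, forall k, (T <= k)%N -> mn (M ^+ k *m x) < e.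
  move=> x e e0.
  set Z := c * (d%:R * q%:R).
  have Z0 : 0 <= Z by apply: mulr_ge0 => //; apply: mulr_ge0.
  set r := e / (Z + 1).
  have r0 : 0 < r by apply: divr_gt0 => //; lra.
  have hr : r * (Z + 1) = e by rewrite mulfVK //; apply: lt0r_neq0; lra.
  have ht := @tail_small R (fun j => ss (CN *m M ^+ j *m x)) _ (fun j => ss_ge0 _)
     (fun K => psum_le heq hpd K x).
  case: (ht (r ^+ 2) (exprn_gt0 2 r0)) => T hT; exists T => k hk.
  apply: le_lt_trans (hc _) _.
  apply: (@le_lt_trans _ _ (c * \sum_(j < d) q%:R * r)).
    apply: ler_wpM2l => //; apply: ler_sum => j _; rewrite hshift.
    apply: mn_ss; first exact: ltW.
    apply: ltW; apply: hT; exact: leq_trans hk (leq_addl _ _).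
  have -> : c * \sum_(j < d) q%:R * r = Z * r.
    by rewrite sumr_const card_ord -mulr_natl /Z; ring.
  nra.
have hA0 : 0 <= mn A := mn_ge0 A.
split.
  move=> e e0.
  set Z := (1 + mn A) * (c * (d%:R * (q%:R * (n%:R * (1 + mP))))).
  have Z0 : 0 <= Z.
    apply: mulr_ge0; first lra.
    apply: mulr_ge0 => //; apply: mulr_ge0 => //; apply: mulr_ge0 => //.
    apply: mulr_ge0 => //; lra.
  set dl := e / (Z + 1).
  have dl0 : 0 < dl by apply: divr_gt0 => //; lra.
  exists dl => // x hx t i.
  have hmx : mn x <= n%:R * dl.
    rewrite mn_cV.
    apply: (@le_trans _ _ (\sum_(i < n) dl)); last by rewrite sumr_const card_ord mulr_natl.
    by apply: ler_sum => j _; apply: ltW; rewrite -ltcR -normE; exact: hx.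
  rewrite normE ltcR; apply: le_lt_trans (mn_entry _ i 0) _.
  apply: le_lt_trans (mn_traj A x t) _.
  apply: (@le_lt_trans _ _ ((1 + mn A) * (c * (d%:R * (q%:R * (mn x * (1 + mP))))))).
    by apply: ler_wpM2l; [lra | exact: B1].
  apply: (@le_lt_trans _ _ (Z * dl)).
    have -> : Z * dl = (1 + mn A) * (c * (d%:R * (q%:R * ((n%:R * dl) * (1 + mP))))).
      by rewrite /Z; ring.
    apply: ler_wpM2l; first lra.
    apply: ler_wpM2l => //; apply: ler_wpM2l => //; apply: ler_wpM2l => //.
    by apply: ler_wpM2r => //; lra.
  rewrite /dl mulrA ltr_pdivrMr; last lra.
  nra.
move=> x e e0.
set E := e / (1 + mn A).
have E0 : 0 < E by apply: divr_gt0 => //; lra.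
have hE : (1 + mn A) * E = e by rewrite /E mulrC mulfVK //; apply: lt0r_neq0; lra.
case: (B2 x E E0) => T hT; exists (T.*2) => t ht i.
have ht2 : (T <= t./2)%N by rewrite -(doubleK T); exact: half_leq.
rewrite normE ltcR; apply: le_lt_trans (mn_entry _ i 0) _.
apply: le_lt_trans (mn_traj A x t) _.
rewrite -hE ltr_pM2l; last lra.
exact: hT.
Qed.

End Aux7.

Section Aux8.
Variable R : realType.
Local Notation C := R[i].

Definition vecr m k (z : 'M[C]_(m,k)) : 'M[R]_(m + m, k) := col_mx (reM z) (imM z).

Lemma Re_sum (I : finType) (F : I -> C) :
  complex.Re (\sum_i F i) = \sum_i complex.Re (F i).
Proof. exact: (big_morph _ (@Re_add R) (erefl _)). Qed.
Lemma Im_sum (I : finType) (F : I -> C) :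
  complex.Im (\sum_i F i) = \sum_i complex.Im (F i).
Proof. exact: (big_morph _ (@Im_add R) (erefl _)). Qed.

Lemma reM_mul m p k (B : 'M[C]_(m,p)) (z : 'M[C]_(p,k)) :
  reM (B *m z) = reM B *m reM z - imM B *m imM z.
Proof.
apply/matrixP => i j; rewrite !mxE Re_sum -sumrB; apply: eq_bigr => l _.
by rewrite !mxE; case: (B i l) => a b; case: (z l j) => c d.
Qed.
Lemma imM_mul m p k (B : 'M[C]_(m,p)) (z : 'M[C]_(p,k)) :
  imM (B *m z) = reM B *m imM z + imM B *m reM z.
Proof.
apply/matrixP => i j; rewrite !mxE Im_sum -big_split; apply: eq_bigr => l _.
by rewrite !mxE; case: (B i l) => a b; case: (z l j) => c d.
Qed.
Lemma reM_opp m p (B : 'M[C]_(m,p)) : reM (- B) = - reM B.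
Proof. by apply/matrixP => i j; rewrite !mxE; case: (B i j). Qed.
Lemma imM_opp m p (B : 'M[C]_(m,p)) : imM (- B) = - imM B.
Proof. by apply/matrixP => i j; rewrite !mxE; case: (B i j). Qed.
Lemma reM_conj m p (B : 'M[C]_(m,p)) : reM (conjm B) = reM B.
Proof. by apply/matrixP => i j; rewrite !mxE; case: (B i j). Qed.
Lemma imM_conj m p (B : 'M[C]_(m,p)) : imM (conjm B) = - imM B.
Proof. by apply/matrixP => i j; rewrite !mxE; case: (B i j). Qed.

Lemma realrep_mul m p k (B : 'M[C]_(m,p)) (z : 'M[C]_(p,k)) :
  realrep 0 B *m vecr z = vecr (conjm (B *m z)).
Proof.
rewrite /realrep /vecr add0r sub0r mul_block_col reM_conj imM_conj.
rewrite reM_mul imM_mul reM_opp imM_opp !mulNmx opprD.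
by rewrite [- _ - _]addrC.
Qed.

End Aux8.

Section Aux9.
Variable R : realType.
Local Notation C := R[i].

Lemma vecr0 m k : vecr (0 : 'M[C]_(m,k)) = 0.
Proof.
by rewrite /vecr; apply/matrixP => i j; rewrite !mxE; case: splitP => l _; rewrite !mxE.
Qed.

Lemma antiobs_obs n p (A : 'M[C]_n) (C2 : 'M[C]_(p,n)) :
  antilin_observable A C2 -> observable (conjm A *m A) (col_mx C2 (conjm C2 *m A)).
Proof.
move=> hobs x0 h0.
have htraj : forall t, (realrep 0 A) ^+ t *m vecr x0 = vecr (antilin_traj A x0 t).
  elim=> [|t IH]; first by rewrite expr0 mul1mx.
  have -> : realrep 0 A ^+ t.+1 = realrep 0 A *m realrep 0 A ^+ t by rewrite exprS.
  by rewrite -mulmxA IH realrep_mul /= conjmM.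
have hz : forall t, C2 *m antilin_traj A x0 t = 0.
  move=> t; rewrite -[t]odd_double_half.
  have hk : forall k, col_mx (C2 *m (conjm A *m A) ^+ k *m x0)
      (conjm C2 *m A *m (conjm A *m A) ^+ k *m x0) = 0.
    by move=> k; rewrite -!mul_col_mx; exact: h0.
  case: (odd t) => /=; rewrite add0n traj_even.
    move: (hk t./2) => /eqP; rewrite col_mx_eq0 => /andP [_ /eqP h].
    have -> : C2 *m (conjm A *m conjm ((conjm A *m A) ^+ t./2 *m x0)) =
      conjm (conjm C2 *m A *m (conjm A *m A) ^+ t./2 *m x0).
      by rewrite -mulmxA !conjmM !conjmK mulmxA.
    by rewrite h conjm0.
  move: (hk t./2) => /eqP; rewrite col_mx_eq0 => /andP [/eqP h _].
  by rewrite mulmxA.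
have hv : forall t, realrep 0 C2 *m (realrep 0 A) ^+ t *m vecr x0 = 0.
  by move=> t; rewrite -mulmxA htraj realrep_mul hz conjm0 vecr0.
have := hobs _ hv => /eqP; rewrite col_mx_eq0 => /andP [/eqP hr /eqP hi].
apply/matrixP => i j.
move/matrixP: hr => /(_ i j) hr'; move/matrixP: hi => /(_ i j) hi'.
move: hr' hi'; rewrite !mxE; case: (x0 i j) => a b /= -> ->; by [].
Qed.

Section Alg.
Variables (n p : nat) (A : 'M[C]_n) (C2 : 'M[C]_(p,n)).
Local Notation M := (conjm A *m A).
Definition fA (X : 'M[C]_n) := hermt A *m conjm X *m A.

Lemma conjm_hermt m k (X : 'M[C]_(m,k)) : conjm (hermt X) = hermt (conjm X).
Proof. by rewrite /hermt conjm_tr. Qed.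
Lemma fAD X Y : fA (X + Y) = fA X + fA Y.
Proof. by rewrite /fA conjmD mulmxDr mulmxDl. Qed.
Lemma fAN X : fA (- X) = - fA X.
Proof. by rewrite /fA conjmN mulmxN mulNmx. Qed.
Lemma fAB X Y : fA (X - Y) = fA X - fA Y.
Proof. by rewrite fAD fAN. Qed.
Lemma fAfA X : fA (fA X) = hermt M *m X *m M.
Proof. by rewrite /fA !conjmM conjmK hermtM conjm_hermt !mulmxA. Qed.
Lemma fAG : fA (hermt C2 *m C2) = hermt (conjm C2 *m A) *m (conjm C2 *m A).
Proof. by rewrite /fA conjmM hermtM conjm_hermt !mulmxA. Qed.
Lemma hCN : hermt (col_mx C2 (conjm C2 *m A)) *m col_mx C2 (conjm C2 *m A) =
  hermt C2 *m C2 + fA (hermt C2 *m C2).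
Proof.
by rewrite fAG /hermt /conjm map_col_mx tr_col_mx mul_row_col.
Qed.

Lemma zI (V : zmodType) (a b P G fG : V) :
  a = P - G -> b = a - fG -> b - P = - (G + fG).
Proof.
move=> -> ->; rewrite opprD addrAC [P - G - P]addrAC subrr add0r.
by [].
Qed.
Lemma zII (V : zmodType) (a b P G fG : V) :
  b - P = - (G + fG) -> b - a + fG = - (a - P + G).
Proof.
move=> h; have hb : b = P - (G + fG) by rewrite -h addrC subrK.
rewrite hb !opprD !opprK !addrA.
rewrite [P - G - fG - a]addrAC addrNK.
by rewrite [P - G - a]addrAC [- a + P]addrC.
Qed.

End Alg.
End Aux9.

Section Aux10.
Variable R : realType.
Local Notation C := R[i].

Lemma lyapN n q (M : 'M[C]_n) (CN : 'M[C]_(q,n)) :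
  (forall x : 'cV[C]_n, cv0 (fun k => M ^+ k *m x)) -> observable M CN ->
  exists! P : 'M[C]_n, posdef P /\ hermt M *m P *m M - P = - (hermt CN *m CN).
Proof.
move=> hcv hobs.
have hinj : forall X, Lf M X = 0 -> X = 0.
  move=> X /eqP; rewrite subr_eq0 => /eqP; exact: fix_zero.
case: (Lf_surj hinj (- (hermt CN *m CN))) => P hP.
have hh : hermt P = P.
  have : Lf M (hermt P - P) = 0.
    rewrite raddfB /=.
    have -> : Lf M (hermt P) = hermt (Lf M P).
      by rewrite /Lf hermtB !hermtM hermtK !mulmxA.
    by rewrite hP hermtN hermtM hermtK subrr.
  by move/hinj/eqP; rewrite subr_eq0 => /eqP.
exists P; split.
  split => //; split => // x hx.
  exact: (sol_posdef hP hh hcv hobs hx).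
move=> P' [_ hP']; apply/eqP; rewrite -subr_eq0; apply/eqP; apply: hinj.
by rewrite raddfB /= hP; rewrite /Lf hP' subrr.
Qed.

Lemma zIII (V : zmodType) (a a' P P' G : V) :
  a - P = - G -> a' - P' = - G -> a - a' = P - P'.
Proof.
move=> h h'.
have ha : a = P - G by rewrite -[a](subrK P) h addrC.
have ha' : a' = P' - G by rewrite -[a'](subrK P') h' addrC.
by rewrite ha ha' opprB addrA subrK.
Qed.

End Aux10.

Theorem corollary5 (R : realType) (n p q : nat)
  (A2 : 'M[R[i]]_n) (C2 : 'M[R[i]]_(p, n)) (CN : 'M[R[i]]_(q, n))
  (hobs2 : antilin_observable A2 C2)
  (hobsN : observable (conjm A2 *m A2) CN) :
  (antilin_asym_stable A2 <->
     exists! P1 : 'M[R[i]]_n, posdef P1 /\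
       hermt A2 *m conjm P1 *m A2 - P1 = - (hermt C2 *m C2)) /\
  (antilin_asym_stable A2 <->
     exists! PN : 'M[R[i]]_n, posdef PN /\
       hermt (conjm A2 *m A2) *m PN *m (conjm A2 *m A2) - PN = - (hermt CN *m CN)) /\
  (antilin_asym_stable A2 ->
     forall P1 : 'M[R[i]]_n,
       hermt A2 *m conjm P1 *m A2 - P1 = - (hermt C2 *m C2) <->
       hermt (conjm A2 *m A2) *m P1 *m (conjm A2 *m A2) - P1 =
         - (hermt (col_mx C2 (conjm C2 *m A2)) *m col_mx C2 (conjm C2 *m A2))).
Proof.
have hobs' := antiobs_obs hobs2.
set CN' := col_mx C2 (conjm C2 *m A2) in hobs' *.
set G := hermt C2 *m C2.
have hG : hermt CN' *m CN' = G + fA A2 G by rewrite hCN.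
have key1 : forall P, hermt A2 *m conjm P *m A2 - P = - G ->
    hermt (conjm A2 *m A2) *m P *m (conjm A2 *m A2) - P = - (hermt CN' *m CN').
  move=> P h; rewrite hG -fAfA; apply: (@zI _ (fA A2 P)) => //.
    by rewrite -[fA A2 P](subrK P) /fA h addrC.
  by rewrite -fAB; congr fA; rewrite -[fA A2 P](subrK P) /fA h addrC.
have key2 : antilin_asym_stable A2 -> forall P,
    hermt (conjm A2 *m A2) *m P *m (conjm A2 *m A2) - P = - (hermt CN' *m CN') ->
    hermt A2 *m conjm P *m A2 - P = - G.
  move=> hst P h; rewrite hG -fAfA in h.
  have hE := zII (fA A2 P) h.
  set E := fA A2 P - P + G in hE.
  have hfE : fA A2 E = - E by rewrite /E !fAD fAN.
  have hE0 : E = 0.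
    apply: (fix_zero (stab_cv hst)); rewrite -fAfA hfE fAN hfE opprK.
    by [].
  by apply/eqP; rewrite -addr_eq0; apply/eqP.
split; [|split].
- split.
    move=> hst; case: (lyapN (stab_cv hst) hobs') => P [[hpd heqP] huniq].
    exists P; split; first by split => //; exact: key2.
    by move=> P' [hpd' h']; apply: huniq; split => //; exact: key1.
  by case=> P [[hpd h] _]; exact: (conv_stable hpd (key1 _ h) hobs').
- split.
    by move=> hst; exact: (lyapN (stab_cv hst) hobsN).
  by case=> P [[hpd h] _]; exact: (conv_stable hpd h hobsN).
- by move=> hst P; split; [exact: key1 | exact: key2].
Qed.
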